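(* Let $f\colon A\to B$ be a group homomorphism and $L=L_f$. Suppose there exist a group $G$ whose localization homomorphism $\eta_G\colon G\to LG$ is not an isomorphism and has $L$-local kernel, and an $L$-local group $E$ with a surjective homomorphism $E\to LG$ such that $\mathrm{Hom}(A,E)=\{1\}=\mathrm{Hom}(B,E)$. Then the pullback $P=E\times_{LG}G$ is $L$-local; in particular $P\to E$ is not the localization homomorphism of $P$, and $L$ is not conditionally flat.
   Context: For a group homomorphism $f\colon A\to B$, a group $M$ is $f$-local ($L$-local) if $\mathrm{Hom}(B,M)\to\mathrm{Hom}(A,M)$ is a bijection; $L=L_f$ assigns to each group $G$ an $f$-local group $LG$ with a natural homomorphism $\eta_G\colon G\to LG$ initial among homomorphisms to $f$-local groups. An extension $1\to N\to E\to Q\to 1$ is $L$-flat if $1\to LN\to LE\to LQ\to 1$ is again short exact; $L$ is conditionally flat if every pullback of an $L$-flat extension along any homomorphism $Q'\to Q$ is $L$-flat. *)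

(* Defs.v *)
From Stdlib Require Import Classical FunctionalExtensionality.

Set Implicit Arguments.

Record Grp := MkGrp {
  car :> Type;
  gmul : car -> car -> car;
  ginv : car -> car;
  gone : car;
  gmulA : forall x y z, gmul x (gmul y z) = gmul (gmul x y) z;
  gmul1l : forall x, gmul gone x = x;
  gmul1r : forall x, gmul x gone = x;
  gmulVl : forall x, gmul (ginv x) x = gone;
  gmulVr : forall x, gmul x (ginv x) = gone
}.

Arguments gmul {g} _ _.
Arguments ginv {g} _.
Arguments gone {g}.

Record Hom (G H : Grp) := MkHom {
  hfun :> G -> H;
  hmul : forall x y, hfun (gmul x y) = gmul (hfun x) (hfun y)
}.

Definition injective_hom (G H : Grp) (phi : Hom G H) : Prop :=
  forall x y, phi x = phi y -> x = y.

Definition surjective_hom (G H : Grp) (phi : Hom G H) : Prop :=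
  forall y, exists x, phi x = y.

Definition is_iso (G H : Grp) (phi : Hom G H) : Prop :=
  exists psi : Hom H G, (forall x, psi (phi x) = x) /\ (forall y, phi (psi y) = y).

Definition only_trivial_homs (X M : Grp) : Prop :=
  forall phi : Hom X M, forall x, phi x = gone.

Definition is_kernel (K G H : Grp) (k : Hom K G) (phi : Hom G H) : Prop :=
  injective_hom k /\ forall y, phi y = gone <-> exists x, k x = y.

Definition short_exact (N E Q : Grp) (i : Hom N E) (p : Hom E Q) : Prop :=
  injective_hom i /\ surjective_hom p /\ (forall y, p y = gone <-> exists x, i x = y).

Definition is_local (A B : Grp) (f : Hom A B) (M : Grp) : Prop :=
  (forall phi psi : Hom B M, (forall a, phi (f a) = psi (f a)) -> forall b, phi b = psi b)
  /\ (forall chi : Hom A M, exists phi : Hom B M, forall a, phi (f a) = chi a).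

Definition is_localization (A B : Grp) (f : Hom A B) (G LG : Grp) (eta : Hom G LG) : Prop :=
  is_local f LG /\
  forall M : Grp, is_local f M -> forall g : Hom G M,
    (exists h : Hom LG M, forall x, h (eta x) = g x) /\
    (forall h1 h2 : Hom LG M, (forall x, h1 (eta x) = h2 (eta x)) -> forall y, h1 y = h2 y).

Definition is_pullback (E Q Q' P : Grp) (p : Hom E Q) (g : Hom Q' Q)
    (q1 : Hom P E) (q2 : Hom P Q') : Prop :=
  (forall x, p (q1 x) = g (q2 x)) /\
  forall (X : Grp) (a : Hom X E) (b : Hom X Q'), (forall x, p (a x) = g (b x)) ->
    (exists h : Hom X P, forall x, q1 (h x) = a x /\ q2 (h x) = b x) /\
    (forall h1 h2 : Hom X P,
        (forall x, q1 (h1 x) = a x /\ q2 (h1 x) = b x) ->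
        (forall x, q1 (h2 x) = a x /\ q2 (h2 x) = b x) -> forall x, h1 x = h2 x).

(* A localization functor L = L_f: object part L, unit eta, and morphism part
   Lmap, natural with respect to eta (Lmap is then uniquely determined). *)
Definition is_localization_functor (A B : Grp) (f : Hom A B)
    (L : Grp -> Grp) (eta : forall G : Grp, Hom G (L G))
    (Lmap : forall G H : Grp, Hom G H -> Hom (L G) (L H)) : Prop :=
  (forall G : Grp, is_localization f (eta G)) /\
  (forall (G H : Grp) (phi : Hom G H) (x : G), Lmap G H phi (eta G x) = eta H (phi x)).

Definition L_flat (L : Grp -> Grp) (Lmap : forall G H : Grp, Hom G H -> Hom (L G) (L H))
    (N E Q : Grp) (i : Hom N E) (p : Hom E Q) : Prop :=
  short_exact i p /\ short_exact (Lmap N E i) (Lmap E Q p).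

(* L is conditionally flat: every pullback of an L-flat extension along any
   Q' -> Q is L-flat. The pulled-back extension is 1 -> N -i'-> E' -q2-> Q' -> 1,
   where E' = E x_Q Q' and i' = (i, 1). *)
Definition conditionally_flat (L : Grp -> Grp)
    (Lmap : forall G H : Grp, Hom G H -> Hom (L G) (L H)) : Prop :=
  forall (N E Q : Grp) (i : Hom N E) (p : Hom E Q), L_flat L Lmap i p ->
  forall (Q' : Grp) (g : Hom Q' Q) (E' : Grp) (q1 : Hom E' E) (q2 : Hom E' Q')
         (i' : Hom N E'),
    is_pullback p g q1 q2 ->
    (forall n, q1 (i' n) = i n) -> (forall n, q2 (i' n) = gone) ->
    L_flat L Lmap i' q2.

(* Main.v *)
Require Import Defs.
From Stdlib Require Import Classical FunctionalExtensionality ProofIrrelevance ClassicalEpsilon.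
Set Implicit Arguments.
Arguments gmulA {g} x y z. Arguments gmul1l {g} x. Arguments gmul1r {g} x. Arguments gmulVl {g} x. Arguments gmulVr {g} x.

Section GL.
Variable G : Grp.
Lemma g_cancel_l (u : G) : u = gmul u u -> u = gone.
Proof. intro H. transitivity (gmul (gmul (ginv u) u) u).
  - now rewrite gmulVl, gmul1l.
  - rewrite <- gmulA, <- H. apply gmulVl. Qed.
Lemma g_inv_uniq (a b : G) : gmul a b = gone -> a = ginv b.
Proof. intro H. rewrite <- (gmul1r a). rewrite <- (gmulVr b). rewrite gmulA, H. apply gmul1l. Qed.
Lemma g_eq_of (x y : G) : gmul x (ginv y) = gone -> x = y.
Proof. intro H. rewrite <- (gmul1r x). rewrite <- (gmulVl y). rewrite gmulA, H. apply gmul1l. Qed.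
End GL.

Lemma hom_one (G H : Grp) (phi : Hom G H) : phi gone = gone.
Proof. apply g_cancel_l. rewrite <- hmul. now rewrite gmul1l. Qed.
Lemma hom_inv (G H : Grp) (phi : Hom G H) x : phi (ginv x) = ginv (phi x).
Proof. apply g_inv_uniq. rewrite <- hmul, gmulVl. apply hom_one. Qed.

Definition comp (X Y Z : Grp) (phi : Hom X Y) (psi : Hom Y Z) : Hom X Z.
Proof. refine (MkHom X Z (fun x => psi (phi x)) _). intros. now rewrite !hmul. Defined.
Definition idh (X : Grp) : Hom X X.
Proof. refine (MkHom X X (fun x => x) _). reflexivity. Defined.
Definition triv (X Y : Grp) : Hom X Y.
Proof. refine (MkHom X Y (fun _ => gone) _). intros. symmetry. apply gmul1l. Defined.

Lemma inj_of_ker (G H : Grp) (phi : Hom G H) :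
  (forall x, phi x = gone -> x = gone) -> injective_hom phi.
Proof. intros Hk x y Hxy. apply g_eq_of. apply Hk.
  rewrite hmul, hom_inv, Hxy. apply gmulVr. Qed.

Lemma bij_iso (G H : Grp) (phi : Hom G H) :
  injective_hom phi -> surjective_hom phi -> is_iso phi.
Proof. intros Hi Hs.
  assert (C : forall y, {x | phi x = y}) by (intro y; apply constructive_indefinite_description; apply Hs).
  assert (Hm : forall y1 y2, proj1_sig (C (gmul y1 y2)) = gmul (proj1_sig (C y1)) (proj1_sig (C y2))).
  { intros. apply Hi. rewrite hmul. now rewrite !(proj2_sig (C _)). }
  exists (MkHom H G (fun y => proj1_sig (C y)) Hm). simpl. split.
  - intro x. apply Hi. apply (proj2_sig (C _)).
  - intro y. apply (proj2_sig (C _)).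
Qed.

Lemma triv_local (A B : Grp) (f : Hom A B) (M : Grp) :
  only_trivial_homs A M -> only_trivial_homs B M -> is_local f M.
Proof. intros HA HB. split.
  - intros phi psi _ b. now rewrite (HB phi), (HB psi).
  - intro chi. exists (triv B M). intro a. simpl. now rewrite (HA chi).
Qed.

Lemma local_eta_bij (A B : Grp) (f : Hom A B) (L : Grp -> Grp) (eta : forall G : Grp, Hom G (L G))
  (Hloc : forall G, is_localization f (eta G)) (M : Grp) (HM : is_local f M) :
  exists r : Hom (L M) M, (forall x, r (eta M x) = x) /\ (forall y, eta M (r y) = y).
Proof. destruct (Hloc M) as [HLM Hu].
  destruct (proj1 (Hu M HM (idh M))) as [r Hr]. exists r. split; [exact Hr|].
  destruct (Hu (L M) HLM (eta M)) as [_ Hu2].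
  intro y. apply (Hu2 (comp r (eta M)) (idh _)). intro x. simpl. now rewrite Hr.
Qed.

Lemma factor_ker (K G Q X : Grp) (k : Hom K G) (eta : Hom G Q) (Hk : is_kernel k eta)
  (g : Hom X G) : (forall x, eta (g x) = gone) -> exists d : Hom X K, forall x, k (d x) = g x.
Proof. intro Hg. destruct Hk as [Hi Hker].
  assert (C : forall x, {w | k w = g x}) by (intro x; apply constructive_indefinite_description; apply (proj1 (Hker _)), Hg).
  assert (Hm : forall y1 y2, proj1_sig (C (gmul y1 y2)) = gmul (proj1_sig (C y1)) (proj1_sig (C y2))).
  { intros. apply Hi. rewrite hmul, !(proj2_sig (C _)). apply hmul. }
  exists (MkHom X K (fun y => proj1_sig (C y)) Hm). intro x. apply (proj2_sig (C _)).
Qed.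

Lemma pb_uniq (E Q G P : Grp) (pi : Hom E Q) (eta : Hom G Q) (p1 : Hom P E) (p2 : Hom P G)
  (Hpb : is_pullback pi eta p1 p2) (X : Grp) (h1 h2 : Hom X P) :
  (forall x, p1 (h1 x) = p1 (h2 x)) -> (forall x, p2 (h1 x) = p2 (h2 x)) -> forall x, h1 x = h2 x.
Proof. intros H1 H2. destruct Hpb as [Hc Hu].
  assert (Hcc : forall x, pi (comp h1 p1 x) = eta (comp h1 p2 x)) by (intro; apply Hc).
  apply (proj2 (Hu X _ _ Hcc)); intro x; simpl; auto.
Qed.

Lemma pb_kermap (E Q G P K : Grp) (pi : Hom E Q) (eta : Hom G Q) (p1 : Hom P E) (p2 : Hom P G)
  (Hpb : is_pullback pi eta p1 p2) (k : Hom K G) (Hk : is_kernel k eta) :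
  exists h0 : Hom K P, forall x, p1 (h0 x) = gone /\ p2 (h0 x) = k x.
Proof. destruct Hpb as [Hc Hu].
  assert (Hcc : forall x, pi (triv K E x) = eta (k x)).
  { intro x. simpl. rewrite hom_one. symmetry. apply (proj2 Hk). eauto. }
  destruct (proj1 (Hu K _ _ Hcc)) as [h0 Hh0]. exists h0. exact Hh0.
Qed.

Lemma otriv (X P E : Grp) (HX : only_trivial_homs X E) (c : Hom X P) (p : Hom P E) x :
  p (c x) = gone.
Proof. exact (HX (comp c p) x). Qed.

Lemma pb_local (A B : Grp) (f : Hom A B) (E Q G P K : Grp) (pi : Hom E Q) (eta : Hom G Q)
  (p1 : Hom P E) (p2 : Hom P G) (Hpb : is_pullback pi eta p1 p2) (k : Hom K G)
  (Hk : is_kernel k eta) (HK : is_local f K)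
  (HAE : only_trivial_homs A E) (HBE : only_trivial_homs B E) : is_local f P.
Proof.
  destruct (pb_kermap Hpb Hk) as [h0 Hh0].
  assert (Fac : forall X (c : Hom X P), only_trivial_homs X E ->
     exists d : Hom X K, forall x, k (d x) = p2 (c x)).
  { intros X c HX. apply (factor_ker Hk (comp c p2)). intro x. simpl.
    rewrite <- (proj1 Hpb). pose proof (HX (comp c p1) x) as Hx; simpl in Hx; rewrite Hx. apply hom_one. }
  split.
  - intros phi psi Hag b.
    apply (pb_uniq Hpb).
    + intro x. now rewrite (otriv HBE phi p1), (otriv HBE psi p1).
    + intro x. destruct (Fac B phi HBE) as [d1 Hd1]. destruct (Fac B psi HBE) as [d2 Hd2].
      rewrite <- Hd1, <- Hd2. f_equal. apply (proj1 HK). intro a. apply (proj1 Hk).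
      rewrite Hd1, Hd2. now rewrite Hag.
  - intro chi. destruct (Fac A chi HAE) as [d Hd].
    destruct (proj2 HK d) as [phi0 Hphi0]. exists (comp phi0 h0). intro a.
    apply (pb_uniq Hpb (comp f (comp phi0 h0)) chi).
    + intro x. simpl. rewrite (proj1 (Hh0 _)). symmetry. exact (otriv HAE chi p1 x).
    + intro x. simpl. rewrite (proj2 (Hh0 _)). rewrite Hphi0. apply Hd.
Qed.
Lemma sig_eq (X : Type) (P : X -> Prop) (u v : sig P) : proj1_sig u = proj1_sig v -> u = v.
Proof. destruct u, v; simpl; intro; subst. f_equal. apply proof_irrelevance. Qed.

Section Prod.
Variables G H : Grp.
Definition pmul (u v : G * H) : G * H := (gmul (fst u) (fst v), gmul (snd u) (snd v)).
Definition pinv (u : G * H) : G * H := (ginv (fst u), ginv (snd u)).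
Definition prodG : Grp.
Proof. refine (@MkGrp (G * H)%type pmul pinv (gone, gone) _ _ _ _ _);
  intros; unfold pmul, pinv; destruct x; try destruct y; try destruct z; simpl;
  now rewrite ?gmulA, ?gmul1l, ?gmul1r, ?gmulVl, ?gmulVr. Defined.
Definition pfst : Hom prodG G := MkHom prodG G (fun u => fst u) (fun x y => eq_refl).
Definition psnd : Hom prodG H := MkHom prodG H (fun u => snd u) (fun x y => eq_refl).
End Prod.

Section Eqz.
Variables X Y : Grp.
Variables phi psi : Hom X Y.
Definition ecar := {x : X | phi x = psi x}.
Lemma emul_pf (u v : ecar) : phi (gmul (proj1_sig u) (proj1_sig v)) = psi (gmul (proj1_sig u) (proj1_sig v)).
Proof. rewrite !hmul. now rewrite (proj2_sig u), (proj2_sig v). Qed.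
Lemma einv_pf (u : ecar) : phi (ginv (proj1_sig u)) = psi (ginv (proj1_sig u)).
Proof. rewrite !hom_inv. now rewrite (proj2_sig u). Qed.
Lemma eone_pf : phi gone = psi gone.
Proof. now rewrite !hom_one. Qed.
Definition emul (u v : ecar) : ecar := exist _ _ (emul_pf u v).
Definition einv (u : ecar) : ecar := exist _ _ (einv_pf u).
Definition eone : ecar := exist _ _ eone_pf.
Definition eqzG : Grp.
Proof. refine (@MkGrp ecar emul einv eone _ _ _ _ _); intros; apply sig_eq; simpl.
  apply gmulA. apply gmul1l. apply gmul1r. apply gmulVl. apply gmulVr. Defined.
Definition incl : Hom eqzG X := MkHom eqzG X (fun u => proj1_sig u) (fun x y => eq_refl).
Lemma incl_inj : injective_hom incl.
Proof. intros u v H. now apply sig_eq. Qed.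
End Eqz.

Section PB.
Variables E G Q : Grp.
Variables (pi : Hom E Q) (eta : Hom G Q).
Definition pbG := eqzG (comp (pfst E G) pi) (comp (psnd E G) eta).
Definition pq1 : Hom pbG E := comp (incl _ _) (pfst E G).
Definition pq2 : Hom pbG G := comp (incl _ _) (psnd E G).
Lemma pb_is : is_pullback pi eta pq1 pq2.
Proof. split.
  - intro x. exact (proj2_sig x).
  - intros Z a b Hab. split.
    + assert (Hp : forall z, (comp (pfst E G) pi) ((a z, b z) : prodG E G) = (comp (psnd E G) eta) ((a z, b z) : prodG E G)) by (intro; simpl; apply Hab).
      assert (Hm : forall z1 z2, (exist _ _ (Hp (gmul z1 z2)) : pbG) = gmul (exist _ _ (Hp z1) : pbG) (exist _ _ (Hp z2))).
      { intros. apply sig_eq. simpl. unfold pmul. simpl. now rewrite !hmul. }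
      exists (MkHom Z pbG (fun z => exist _ _ (Hp z)) Hm). intro x. simpl. auto.
    + intros h1 h2 H1 H2 x. apply sig_eq.
      destruct (H1 x) as [A1 B1]. destruct (H2 x) as [A2 B2]. simpl in *.
      transitivity ((a x, b x) : prodG E G).
      * rewrite <- A1, <- B1. exact (surjective_pairing (_ : (E * G)%type)).
      * rewrite <- A2, <- B2. exact (eq_sym (surjective_pairing (proj1_sig (h2 x) : (E * G)%type))).
Qed.
End PB.

Theorem proposition4p4
  (A B : Grp) (f : Hom A B)
  (L : Grp -> Grp) (eta : forall G : Grp, Hom G (L G))
  (Lmap : forall G H : Grp, Hom G H -> Hom (L G) (L H))
  (HL : is_localization_functor f L eta Lmap)
  (G : Grp)
  (HGnot : ~ is_iso (eta G))
  (HGker : exists (K : Grp) (k : Hom K G), is_kernel k (eta G) /\ is_local f K)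
  (E : Grp) (HE : is_local f E)
  (pi : Hom E (L G)) (Hpi : surjective_hom pi)
  (HAE : only_trivial_homs A E) (HBE : only_trivial_homs B E) :
  (forall (P : Grp) (p1 : Hom P E) (p2 : Hom P G),
      is_pullback pi (eta G) p1 p2 ->
      is_local f P /\ ~ is_localization f p1)
  /\ ~ conditionally_flat L Lmap.
Proof.
  destruct HL as [Hloc Hnat].
  destruct HGker as [K [k [Hk HK]]].
  assert (Hker := proj2 Hk).
  assert (Hkerx : forall x, eta G x = gone -> exists w, k w = x) by (intros; apply Hker; auto).
  split.
  - intros P p1 p2 Hpb.
    assert (HP : is_local f P) by exact (pb_local Hpb Hk HK HAE HBE).
    split; [exact HP|]. intro Hl.
    destruct Hl as [_ Hu].
    destruct (proj1 (Hu P HP (idh P))) as [h Hh].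
    assert (Hp1h : forall y, p1 (h y) = y).
    { intro y. apply (proj2 (Hu E HE p1) (comp h p1) (idh E)). intro x. simpl. now rewrite Hh. }
    assert (Hp1i : forall u v, p1 u = p1 v -> u = v).
    { intros u v Huv. transitivity (h (p1 u)); [symmetry; apply Hh|]. rewrite Huv. apply Hh. }
    destruct (pb_kermap Hpb Hk) as [h0 Hh0].
    apply HGnot. apply bij_iso.
    + apply inj_of_ker. intros x Hx. destruct (Hkerx x Hx) as [w Hw]. subst x.
      assert (h0 w = gone) by (apply Hp1i; rewrite hom_one; apply Hh0).
      rewrite <- (proj2 (Hh0 w)), H. apply hom_one.
    + intro y. destruct (Hpi y) as [e He]. exists (p2 (h e)).
      rewrite <- (proj1 Hpb). now rewrite Hp1h.
  - intro Hcf.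
    set (N := eqzG pi (triv E (L G))).
    set (i := incl pi (triv E (L G))).
    assert (Hiinj : injective_hom i) by apply incl_inj.
    assert (HNl : is_local f N).
    { apply triv_local; intros phi x; apply Hiinj; rewrite hom_one.
      - exact (otriv HAE phi i x). - exact (otriv HBE phi i x). }
    assert (HLGl : is_local f (L G)) by apply (Hloc G).
    destruct (@local_eta_bij _ _ f L eta Hloc _ HNl) as [rN [rN1 rN2]].
    destruct (@local_eta_bij _ _ f L eta Hloc _ HE) as [rE [rE1 rE2]].
    destruct (@local_eta_bij _ _ f L eta Hloc _ HLGl) as [rLG [rLG1 rLG2]].
    assert (Hex : forall y, pi y = gone <-> exists x, i x = y).
    { intro y. split.
      - intro Hy. exists (exist _ y Hy : N). reflexivity.
      - intros [x Hx]. subst y. exact (proj2_sig x). }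
    assert (LF : L_flat L Lmap i pi).
    { split; [split; [exact Hiinj| split; [exact Hpi| exact Hex]]|].
      split; [|split].
      - intros u v Huv. rewrite <- (rN2 u), <- (rN2 v) in *. rewrite !Hnat in Huv.
        apply (f_equal rE) in Huv. rewrite !rE1 in Huv. apply Hiinj in Huv. now rewrite Huv.
      - intro y. destruct (Hpi (rLG y)) as [e He]. exists (eta E e). now rewrite Hnat, He.
      - intro y. rewrite <- (rE2 y). rewrite Hnat. split.
        + intro Hy. apply (f_equal rLG) in Hy. rewrite rLG1 in Hy.
          rewrite <- (hom_one (eta (L G))), rLG1 in Hy.
          destruct (proj1 (Hex _) Hy) as [n Hn]. exists (eta N n). rewrite Hnat. f_equal. exact Hn.
        + intros [x Hx]. rewrite <- (rN2 x) in Hx. rewrite Hnat in Hx.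
          apply (f_equal rE) in Hx. rewrite !rE1 in Hx. rewrite <- Hx.
          rewrite (proj2 (Hex _)) by eauto. apply hom_one. }
    set (P := pbG pi (eta G)).
    assert (Hpb := pb_is pi (eta G)).
    assert (Hc : forall n, pi (i n) = eta G (triv N G n)).
    { intro n. simpl. rewrite hom_one. exact (proj2_sig n). }
    destruct (proj1 (proj2 Hpb N i (triv N G) Hc)) as [i' Hi'].
    assert (Hi'1 : forall n, pq1 pi (eta G) (i' n) = i n) by (intro; apply Hi').
    assert (Hi'2 : forall n, pq2 pi (eta G) (i' n) = gone) by (intro; apply Hi').
    destruct (Hcf N E (L G) i pi LF G (eta G) P _ _ i' Hpb Hi'1 Hi'2) as [_ [Hinj' [Hsurj' Hex']]].
    assert (HP : is_local f P) by exact (pb_local Hpb Hk HK HAE HBE).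
    destruct (@local_eta_bij _ _ f L eta Hloc _ HP) as [rP [rP1 rP2]].
    destruct (pb_kermap Hpb Hk) as [h0 Hh0].
    apply HGnot. apply bij_iso.
    + apply inj_of_ker. intros x Hx. destruct (Hkerx x Hx) as [w Hw]. subst x.
      assert (Hz : Lmap P G (pq2 pi (eta G)) (eta P (h0 w)) = gone).
      { rewrite Hnat. transitivity (eta G (k w)); [f_equal; apply Hh0 | exact Hx]. }
      destruct (proj1 (Hex' _) Hz) as [n Hn].
      rewrite <- (rN2 n), Hnat in Hn. apply (f_equal rP) in Hn. rewrite !rP1 in Hn.
      rewrite <- (proj2 (Hh0 w)), <- Hn. apply Hi'2.
    + intro y. destruct (Hsurj' y) as [z Hz]. exists (pq2 pi (eta G) (rP z)).
      rewrite <- Hnat, rP2. exact Hz.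
Qed.
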